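(* Let $\mathcal{X}$ be a Banach space and $J:\mathcal{X}\to\mathbb{R}\cup\{\infty\}$ a convex, absolutely one-homogeneous functional. Let $v\in\mathcal{X}$ and $p\in\partial J(v)$, and define $$\mathcal{M}^{\mathrm{B}}=\{u\in\mathcal{X}: D_J^p(u,v)=0\},\qquad \mathcal{M}^{\mathrm{IC}}=\{u\in\mathcal{X}: [D_J^p(\cdot,v)\,\Box\, D_J^{-p}(\cdot,-v)](u)=0\}.$$ Then $\mathcal{M}^{\mathrm{B}}\subset\mathcal{M}^{\mathrm{IC}}$.
   Context: Absolutely one-homogeneous: $J(\lambda u)=|\lambda|J(u)$ for all $\lambda\in\mathbb{R}$. Bregman distance: $D_J^{q}(u,w)=J(u)-J(w)-\langle q,u-w\rangle$ for $q\in\partial J(w)$. Infimal convolution: $(F\Box G)(u)=\inf_{z\in\mathcal{X}}F(u-z)+G(z)$. *)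

(* Defs.v *)
From HB Require Import structures.
From mathcomp Require Import all_boot all_order all_algebra.
From mathcomp Require Import all_classical all_reals all_analysis.
Set Implicit Arguments. Unset Strict Implicit. Unset Printing Implicit Defensive.
Import Order.TTheory GRing.Theory Num.Theory.
Import numFieldNormedType.Exports.
Local Open Scope classical_set_scope.
Local Open Scope ring_scope.

Section Defs.
Variables (R : realType) (X : normedModType R).

Definition in_dual (p : X -> R) : Prop :=
  (forall (a : R) (x y : X), p (a *: x + y) = a * p x + p y) /\ continuous p.

(* J : X -> R \cup {+oo} (never -oo) *)
Definition proper_valued (J : X -> \bar R) : Prop := forall u, J u != -oo%E.

Definition convex_fun (J : X -> \bar R) : Prop :=
  forall (x y : X) (t : R), 0 < t < 1 ->
    (J ((1 - t) *: x + t *: y)%R <= (1 - t)%:E * J x + t%:E * J y)%E.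

Definition abs_one_homogeneous (J : X -> \bar R) : Prop :=
  forall (l : R) (u : X), J (l *: u) = (`|l|%:E * J u)%E.

Definition subdiff (J : X -> \bar R) (w : X) (p : X -> R) : Prop :=
  in_dual p /\ J w \is a fin_num /\
  forall u, (J w + (p (u - w)%R)%:E <= J u)%E.

Definition bregman (J : X -> \bar R) (q : X -> R) (u w : X) : \bar R :=
  (J u - J w - (q (u - w)%R)%:E)%E.

Definition infconv (F G : X -> \bar R) (u : X) : \bar R :=
  ereal_inf [set (F (u - z)%R + G z)%E | z in [set: X]].

End Defs.

(* Main.v *)
Require Import Defs.
From HB Require Import structures.
From mathcomp Require Import all_boot all_order all_algebra.
From mathcomp Require Import all_classical all_reals all_analysis.
From mathcomp Require Import lra.
Import Order.TTheory GRing.Theory Num.Theory.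
Import numFieldNormedType.Exports.
Local Open Scope classical_set_scope.
Local Open Scope ring_scope.

Lemma breg_ge0 (R : realType) (X : normedModType R) (J : X -> \bar R) q (u w : X) r :
  J w = r%:E -> J u != -oo%E -> (J w + (q (u - w))%:E <= J u)%E -> (0 <= bregman J q u w)%E.
Proof.
move=> Jw; rewrite /bregman Jw; case: (J u) => [x| |] //= _.
  by move=> h; rewrite -!EFinD lee_fin; rewrite -!EFinD lee_fin in h; lra.
by move=> _; rewrite !addye.
Qed.

Arguments breg_ge0 {R X J q u w r}.

Theorem lemma1 (R : realType) (X : completeNormedModType R)
  (J : X -> \bar R) (v : X) (p : X -> R) :
  proper_valued J -> convex_fun J -> abs_one_homogeneous J ->
  subdiff J v p ->
  [set u | bregman J p u v = 0%E]
    `<=` [set u | infconv (fun x => bregman J p x v)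
                          (fun x => bregman J (fun y => - p y) x (- v)) u = 0%E].
Proof.
move=> Jp _ Jh [[plin _] [Jvf Jsub]] u /= Bu.
have p0 : p 0 = 0.
  by have := plin 1 0 0; rewrite scale1r addr0 mul1r => h; apply: (addrI (p 0)); rewrite addr0 -h.
have pD x y : p (x + y) = p x + p y by rewrite -[x]scale1r plin mul1r scale1r.
have pN x : p (- x) = - p x.
  by have := plin (-1) x 0; rewrite addr0 p0 addr0 scaleN1r mulN1r.
have J0 : J 0 = 0%E by rewrite -(scale0r (0:X)) Jh normr0 mul0e.
have JN x : J (- x) = J x by rewrite -scaleN1r Jh normrN normr1 mul1e.
have [r Jv] : exists r, J v = r%:E by move: Jvf; case: (J v) => // r; exists r.
have pv : p v = r.
  apply/eqP; rewrite eq_le; apply/andP; split.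
    have := Jsub (2%:R *: v); rewrite Jh Jv -EFinD lee_fin ger0_norm //.
    rewrite -[X in 2%:R *: v - X]scale1r -scalerBl -[_ *: v]addr0 plin p0 addr0.
    rewrite (_ : 2%:R - 1 = 1 :> R) ?mul1r; [lra|lra].
  by have := Jsub 0; rewrite J0 Jv -EFinD lee_fin add0r pN; lra.
apply/eqP; rewrite eq_le; apply/andP; split.
  apply: ereal_inf_lbound; exists 0 => //.
  rewrite subr0 Bu add0e /bregman J0 JN Jv.
  by rewrite sub0r opprK add0r pv -EFinN -EFinB subrr.
apply: le_ereal_inf_tmp => _ [z _ <-]; apply: adde_ge0.
  by apply: (breg_ge0 Jv) => //; exact: Jsub.
apply: (breg_ge0 (r := r)); first by rewrite JN.
  exact: Jp.
have := Jsub (- z); rewrite JN JN Jv -EFinD.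
by rewrite opprK pD !pN pv; apply: le_trans; rewrite -EFinD lee_fin pD pv; lra.
Qed.
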